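(* For every $E>0$ there exist even, non-quadratic $V_1,V_2\in\mathcal{UM}$ with $\deg(V_1,0)=\deg(V_2,0)=2$ such that $a(\theta)=b_E(\theta)$ for every $\theta\in(0,E)$. Moreover, $V_1,V_2$ can be chosen so that in addition $\sqrt{V_2''(0)/V_1''(0)}$ is irrational.
   Context: $\mathcal{UM}$: real-analytic $V:\mathbb R\to\mathbb R_{\ge0}$ with $V(0)=0$, $yV'(y)>0$ for $y\neq0$, $V(y)\to\infty$ as $y\to\pm\infty$; $\deg(V,0)$ is the least $m$ with $V^{(m)}(0)\ne0$; $V^{-1}$ is the inverse of $V|_{[0,\infty)}$. $a(\theta)=\int_0^{V_1^{-1}(\theta)}\frac{dy}{\sqrt2\sqrt{\theta-V_1(y)}}$ for $\theta>0$ and $b_E(\theta)=\int_0^{V_2^{-1}(E-\theta)}\frac{dy}{\sqrt2\sqrt{E-\theta-V_2(y)}}$ for $0\le\theta<E$. *)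

(* Defs.v *)
From Stdlib Require Import Reals Lra ClassicalEpsilon QArith.
From Coquelicot Require Import Coquelicot.
Open Scope R_scope.

Definition real_analytic (V : R -> R) : Prop :=
  forall x0 : R, exists (r : posreal) (c : nat -> R),
    forall x : R, Rabs (x - x0) < r -> is_pseries c (x - x0) (V x).

Definition UM (V : R -> R) : Prop :=
  real_analytic V /\
  (forall y, 0 <= V y) /\
  V 0 = 0 /\
  (forall y, y <> 0 -> y * Derive V y > 0) /\
  filterlim V (Rbar_locally p_infty) (Rbar_locally p_infty) /\
  filterlim V (Rbar_locally m_infty) (Rbar_locally p_infty).

Definition deg_at0 (V : R -> R) (m : nat) : Prop :=
  Derive_n V m 0 <> 0 /\ (forall k : nat, (k < m)%nat -> Derive_n V k 0 = 0).

Definition even_fun (V : R -> R) : Prop := forall y, V (- y) = V y.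

Definition quadratic (V : R -> R) : Prop := exists c : R, forall y, V y = c * y ^ 2.

Definition irrational (x : R) : Prop := ~ exists q : Q, Q2R q = x.

Definition Vinv (V : R -> R) (t : R) : R :=
  epsilon (inhabits 0) (fun y => 0 <= y /\ V y = t).

Definition is_a (V1 : R -> R) (theta l : R) : Prop :=
  is_RInt_gen (fun y => 1 / (sqrt 2 * sqrt (theta - V1 y)))
    (at_point 0) (at_left (Vinv V1 theta)) l.

Definition is_b (V2 : R -> R) (E theta l : R) : Prop :=
  is_RInt_gen (fun y => 1 / (sqrt 2 * sqrt (E - theta - V2 y)))
    (at_point 0) (at_left (Vinv V2 (E - theta))) l.

(* Main.v *)
Require Import Defs.
From Stdlib Require Import Reals QArith.
From Coquelicot Require Import Coquelicot.
From Stdlib Require Import Lra Lia Psatz ClassicalEpsilon Qreals Nsatz ZArith.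
Open Scope R_scope.

Fixpoint pwr (k : nat) (b : nat -> R) : nat -> R :=
  match k with O => b | S k => PS_mult b (pwr k b) end.

Lemma pwr_ext_le : forall k b b' m, (forall i, (i <= m)%nat -> b i = b' i) ->
  pwr k b m = pwr k b' m.
Proof.
  induction k; intros b b' m H; simpl.
  - apply H; lia.
  - unfold PS_mult. apply sum_eq. intros i Hi.
    rewrite (H i Hi). f_equal. apply IHk. intros j Hj. apply H. lia.
Qed.

Lemma pwr_0 : forall k b, b O = 0 -> pwr k b O = 0.
Proof.
  induction k; intros b H; simpl; auto.
  unfold PS_mult. simpl. rewrite H. ring.
Qed.

Lemma pwr_dep : forall k b b' n, b O = 0 -> b' O = 0 ->
  (forall i, (i < n)%nat -> b i = b' i) -> pwr (S k) b n = pwr (S k) b' n.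
Proof.
  intros k b b' n H0 H0' H. simpl. unfold PS_mult. apply sum_eq. intros i Hi.
  destruct (Nat.eq_dec i O) as [->|Hi0].
  - rewrite H0, H0'. ring.
  - destruct (Nat.eq_dec i n) as [->|Hin].
    + rewrite Nat.sub_diag, !pwr_0; auto. ring.
    + rewrite (H i) by lia. f_equal. apply pwr_ext_le. intros j Hj. apply H. lia.
Qed.

Lemma pwr_nonneg : forall k b n, (forall i, 0 <= b i) -> 0 <= pwr k b n.
Proof.
  induction k; intros b n H; simpl; auto.
  unfold PS_mult. apply cond_pos_sum. intros i. apply Rmult_le_pos; auto.
Qed.

Lemma pwr_abs : forall k b n, Rabs (pwr k b n) <= pwr k (fun i => Rabs (b i)) n.
Proof.
  induction k; intros b n; simpl. lra.
  unfold PS_mult. eapply Rle_trans. apply sum_f_R0_triangle.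
  apply sum_Rle. intros i Hi. rewrite Rabs_mult.
  apply Rmult_le_compat_l. apply Rabs_pos. apply IHk.
Qed.

Definition Sp (b : nat -> R) (r : R) (N : nat) := sum_f_R0 (fun n => b n * r ^ n) N.

Lemma Sp_nonneg : forall b r N, (forall i, 0 <= b i) -> 0 <= r -> 0 <= Sp b r N.
Proof. intros. unfold Sp. apply cond_pos_sum. intros. apply Rmult_le_pos; auto. apply pow_le; auto. Qed.

Lemma conv_bound : forall b c r N, (forall i, 0 <= b i) -> (forall i, 0 <= c i) -> 0 <= r ->
  Sp (PS_mult b c) r N <= Sp b r N * Sp c r N.
Proof.
  intros b c r N Hb Hc Hr. destruct N.
  - unfold Sp, PS_mult. simpl. lra.
  - unfold Sp. rewrite cauchy_finite by lia.
    match goal with |- _ <= ?A + ?B => assert (HB : 0 <= B) end.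
    { apply cond_pos_sum. intros k. apply cond_pos_sum. intros l.
      apply Rmult_le_pos; apply Rmult_le_pos; auto; apply pow_le; auto. }
    match goal with |- _ <= ?A + ?B => assert (HA : sum_f_R0 (fun n => PS_mult b c n * r ^ n) (S N) = A) end.
    { apply sum_eq. intros k Hk. unfold PS_mult. rewrite Rmult_comm, scal_sum. apply sum_eq.
      intros p Hp. replace (r ^ k) with (r ^ p * r ^ (k - p)).
      ring. rewrite <- pow_add. f_equal. lia. }
    lra.
Qed.

Lemma pwr_bound : forall k b r N, (forall i, 0 <= b i) -> 0 <= r ->
  Sp (pwr k b) r N <= Sp b r N ^ (S k).
Proof.
  induction k; intros b r N Hb Hr; simpl.
  - lra.
  - eapply Rle_trans. apply conv_bound; auto. intros; apply pwr_nonneg; auto.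
    apply Rmult_le_compat_l. apply Sp_nonneg; auto. apply IHk; auto.
Qed.

Definition trunc (m : nat) (b : nat -> R) : nat -> R :=
  fun i => if (i <=? m)%nat then b i else 0.

Definition Phi (c1 d2 d3 d4 d5 : R) (b : nat -> R) (n : nat) : R :=
  match n with O => 0 | S O => / c1
  | _ => - / c1 * (d2 * pwr 1 b n + d3 * pwr 2 b n + d4 * pwr 3 b n + d5 * pwr 4 b n) end.

Definition iterPhi c1 d2 d3 d4 d5 (m : nat) : nat -> R :=
  Nat.iter m (Phi c1 d2 d3 d4 d5) (fun _ => 0).

Definition coef c1 d2 d3 d4 d5 (n : nat) : R := iterPhi c1 d2 d3 d4 d5 (S n) n.

Lemma Phi_dep : forall c1 d2 d3 d4 d5 b b' n, b O = 0 -> b' O = 0 ->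
  (forall i, (i < n)%nat -> b i = b' i) -> Phi c1 d2 d3 d4 d5 b n = Phi c1 d2 d3 d4 d5 b' n.
Proof.
  intros c1 d2 d3 d4 d5 b b' n H0 H0' H.
  destruct n as [|[|n]]; try reflexivity. unfold Phi.
  rewrite (pwr_dep 0 b b' (S (S n))), (pwr_dep 1 b b' (S (S n))),
    (pwr_dep 2 b b' (S (S n))), (pwr_dep 3 b b' (S (S n))); auto.
Qed.

Lemma iterPhi_0 : forall c1 d2 d3 d4 d5 m, iterPhi c1 d2 d3 d4 d5 m O = 0.
Proof. intros. destruct m; reflexivity. Qed.

Lemma iterPhi_stab : forall c1 d2 d3 d4 d5 k m, (k < m)%nat ->
  iterPhi c1 d2 d3 d4 d5 m k = coef c1 d2 d3 d4 d5 k.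
Proof.
  intros c1 d2 d3 d4 d5 k. induction k as [k IH] using (well_founded_induction Wf_nat.lt_wf).
  intros m Hm. destruct m as [|m]. lia.
  unfold coef. change (iterPhi c1 d2 d3 d4 d5 (S m) k) with (Phi c1 d2 d3 d4 d5 (iterPhi c1 d2 d3 d4 d5 m) k).
  change (iterPhi c1 d2 d3 d4 d5 (S k) k) with (Phi c1 d2 d3 d4 d5 (iterPhi c1 d2 d3 d4 d5 k) k).
  apply Phi_dep; try apply iterPhi_0.
  intros i Hi. rewrite (IH i Hi m) by lia. rewrite (IH i Hi k) by lia. reflexivity.
Qed.

Lemma coef_fix : forall c1 d2 d3 d4 d5 n,
  coef c1 d2 d3 d4 d5 n = Phi c1 d2 d3 d4 d5 (coef c1 d2 d3 d4 d5) n.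
Proof.
  intros. unfold coef at 1.
  change (iterPhi c1 d2 d3 d4 d5 (S n) n) with (Phi c1 d2 d3 d4 d5 (iterPhi c1 d2 d3 d4 d5 n) n).
  apply Phi_dep. apply iterPhi_0. unfold coef. apply iterPhi_0.
  intros i Hi. apply iterPhi_stab. auto.
Qed.

Lemma coef_0 : forall c1 d2 d3 d4 d5, coef c1 d2 d3 d4 d5 O = 0.
Proof. reflexivity. Qed.
Lemma coef_1 : forall c1 d2 d3 d4 d5, coef c1 d2 d3 d4 d5 1 = / c1.
Proof. reflexivity. Qed.

Definition e1c (c1 : R) (n : nat) : R := if (n =? 1)%nat then / c1 else 0.

Lemma Sp_lin : forall u b1 b2 b3 b4 k p1 p2 p3 p4 r N,
  Sp (fun n => u n + k * (p1 * b1 n + p2 * b2 n + p3 * b3 n + p4 * b4 n)) r N =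
  Sp u r N + k * (p1 * Sp b1 r N + p2 * Sp b2 r N + p3 * Sp b3 r N + p4 * Sp b4 r N).
Proof.
  intros. unfold Sp. induction N; simpl. ring. rewrite IHN. ring.
Qed.

Lemma Sp_e1c : forall c1 r N, Sp (e1c c1) r (S N) = r / c1.
Proof.
  intros. unfold Sp. induction N.
  - simpl. unfold e1c. simpl. unfold Rdiv. ring.
  - rewrite tech5, IHN. unfold e1c. simpl. ring.
Qed.

Lemma term_bound : forall c1 d2 d3 d4 d5 n, 0 < c1 ->
  let al := fun i => Rabs (coef c1 d2 d3 d4 d5 i) in
  al n <= e1c c1 n + / c1 * (Rabs d2 * pwr 1 al n + Rabs d3 * pwr 2 al n
                           + Rabs d4 * pwr 3 al n + Rabs d5 * pwr 4 al n).
Proof.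
  intros c1 d2 d3 d4 d5 n Hc al.
  assert (Hal : forall i, 0 <= al i) by (intros; apply Rabs_pos).
  assert (Hp : forall k, 0 <= pwr k al n) by (intros; apply pwr_nonneg; auto).
  assert (HR : 0 <= / c1 * (Rabs d2 * pwr 1 al n + Rabs d3 * pwr 2 al n
                           + Rabs d4 * pwr 3 al n + Rabs d5 * pwr 4 al n)).
  { apply Rmult_le_pos. left; apply Rinv_0_lt_compat; auto.
    pose proof (Hp 1%nat); pose proof (Hp 2%nat); pose proof (Hp 3%nat); pose proof (Hp 4%nat).
    pose proof (Rabs_pos d2); pose proof (Rabs_pos d3); pose proof (Rabs_pos d4); pose proof (Rabs_pos d5).
    nra. }
  destruct n as [|[|n]].
  - replace (e1c c1 0) with 0 by reflexivity. unfold al at 1. rewrite coef_0, Rabs_R0. lra.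
  - replace (e1c c1 1) with (/c1) by reflexivity. unfold al at 1. rewrite coef_1. rewrite Rabs_right. lra.
    left; apply Rinv_0_lt_compat; auto.
  - replace (e1c c1 (S (S n))) with 0 by reflexivity.
    unfold al at 1. rewrite coef_fix. unfold Phi.
    rewrite Rplus_0_l, Rabs_mult, Rabs_Ropp, Rabs_right by (left; apply Rinv_0_lt_compat; auto).
    apply Rmult_le_compat_l. left; apply Rinv_0_lt_compat; auto.
    set (p1 := pwr 1 (coef c1 d2 d3 d4 d5) (S (S n))).
    set (p2 := pwr 2 (coef c1 d2 d3 d4 d5) (S (S n))).
    set (p3 := pwr 3 (coef c1 d2 d3 d4 d5) (S (S n))).
    set (p4 := pwr 4 (coef c1 d2 d3 d4 d5) (S (S n))).
    pose proof (pwr_abs 1 (coef c1 d2 d3 d4 d5) (S (S n))).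
    pose proof (pwr_abs 2 (coef c1 d2 d3 d4 d5) (S (S n))).
    pose proof (pwr_abs 3 (coef c1 d2 d3 d4 d5) (S (S n))).
    pose proof (pwr_abs 4 (coef c1 d2 d3 d4 d5) (S (S n))).
    fold al p1 p2 p3 p4 in H, H0, H1, H2.
    pose proof (Rabs_triang (d2*p1+d3*p2+d4*p3) (d5*p4)).
    pose proof (Rabs_triang (d2*p1+d3*p2) (d4*p3)).
    pose proof (Rabs_triang (d2*p1) (d3*p2)).
    rewrite !Rabs_mult in *.
    pose proof (Rmult_le_compat_l _ _ _ (Rabs_pos d2) H).
    pose proof (Rmult_le_compat_l _ _ _ (Rabs_pos d3) H0).
    pose proof (Rmult_le_compat_l _ _ _ (Rabs_pos d4) H1).
    pose proof (Rmult_le_compat_l _ _ _ (Rabs_pos d5) H2).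
    lra.
Qed.

Lemma Sp_trunc : forall b r N, Sp (trunc N b) r (S N) = Sp b r N.
Proof.
  intros. unfold Sp. rewrite tech5. unfold trunc at 2.
  replace (S N <=? N)%nat with false by (symmetry; apply Nat.leb_gt; lia).
  rewrite Rmult_0_l, Rplus_0_r. apply sum_eq. intros i Hi. unfold trunc.
  replace (i <=? N)%nat with true by (symmetry; apply Nat.leb_le; lia). reflexivity.
Qed.

Lemma Sp_pwr_trunc : forall k b r N, b O = 0 ->
  Sp (pwr (S k) b) r (S N) = Sp (pwr (S k) (trunc N b)) r (S N).
Proof.
  intros k b r N H0. unfold Sp. apply sum_eq. intros n Hn. f_equal.
  apply pwr_dep; auto. unfold trunc. simpl. auto.
  intros i Hi. unfold trunc. replace (i <=? N)%nat with true by (symmetry; apply Nat.leb_le; lia). reflexivity.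
Qed.

Lemma pow_le_sq : forall x s k, 0 <= x <= s -> s <= 1 -> x ^ (S (S k)) <= s ^ 2.
Proof.
  intros x s k Hx Hs. replace (x ^ S (S k)) with (x^2 * x^k) by (simpl; ring).
  assert (x^k <= 1). { rewrite <- (pow1 k). apply pow_incr. lra. }
  assert (x^2 <= s^2) by (apply pow_incr; lra).
  assert (0 <= x^k) by (apply pow_le; lra).
  assert (0 <= x^2) by (apply pow_le; lra).
  nra.
Qed.

Lemma Sp_al_bound : forall c1 d2 d3 d4 d5 r s, 0 < c1 -> 0 <= r -> 0 <= s <= 1 ->
  r / c1 + / c1 * ((Rabs d2 + Rabs d3 + Rabs d4 + Rabs d5) * s ^ 2) <= s ->
  forall N, Sp (fun i => Rabs (coef c1 d2 d3 d4 d5 i)) r N <= s.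
Proof.
  intros c1 d2 d3 d4 d5 r s Hc Hr Hs Hrs N.
  set (al := fun i => Rabs (coef c1 d2 d3 d4 d5 i)).
  assert (Hal : forall i, 0 <= al i) by (intros; apply Rabs_pos).
  assert (Hal0 : al O = 0) by (unfold al; rewrite coef_0; apply Rabs_R0).
  induction N.
  - unfold Sp. simpl. rewrite Hal0. lra.
  - apply Rle_trans with (Sp (fun n => e1c c1 n + / c1 * (Rabs d2 * pwr 1 al n + Rabs d3 * pwr 2 al n
                           + Rabs d4 * pwr 3 al n + Rabs d5 * pwr 4 al n)) r (S N)).
    { unfold Sp. apply sum_Rle. intros n Hn. apply Rmult_le_compat_r. apply pow_le; auto.
      apply (term_bound c1 d2 d3 d4 d5 n Hc). }
    rewrite Sp_lin, Sp_e1c.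
    rewrite !(Sp_pwr_trunc _ al r N Hal0).
    assert (Ht : forall i, 0 <= trunc N al i).
    { intros i. unfold trunc. destruct (i <=? N)%nat; auto. lra. }
    pose proof (pwr_bound 1 (trunc N al) r (S N) Ht Hr).
    pose proof (pwr_bound 2 (trunc N al) r (S N) Ht Hr).
    pose proof (pwr_bound 3 (trunc N al) r (S N) Ht Hr).
    pose proof (pwr_bound 4 (trunc N al) r (S N) Ht Hr).
    rewrite Sp_trunc in H, H0, H1, H2.
    assert (Hx : 0 <= Sp al r N <= s) by (split; auto; apply Sp_nonneg; auto).
    pose proof (pow_le_sq _ _ 0 Hx (proj2 Hs)).
    pose proof (pow_le_sq _ _ 1 Hx (proj2 Hs)).
    pose proof (pow_le_sq _ _ 2 Hx (proj2 Hs)).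
    pose proof (pow_le_sq _ _ 3 Hx (proj2 Hs)).
    pose proof (Rabs_pos d2); pose proof (Rabs_pos d3); pose proof (Rabs_pos d4); pose proof (Rabs_pos d5).
    assert (Hic : 0 < / c1) by (apply Rinv_0_lt_compat; auto).
    assert (Rabs d2 * Sp (pwr 1 (trunc N al)) r (S N) + Rabs d3 * Sp (pwr 2 (trunc N al)) r (S N) +
            Rabs d4 * Sp (pwr 3 (trunc N al)) r (S N) + Rabs d5 * Sp (pwr 4 (trunc N al)) r (S N)
            <= (Rabs d2 + Rabs d3 + Rabs d4 + Rabs d5) * s ^ 2).
    { apply Rle_trans with (Rabs d2 * s^2 + Rabs d3 * s^2 + Rabs d4 * s^2 + Rabs d5 * s^2); [|lra].
      repeat apply Rplus_le_compat; apply Rmult_le_compat_l; auto; eapply Rle_trans; eauto. }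
    nra.
Qed.

Lemma CV_disk_of_bound : forall a r M, 0 <= r ->
  (forall N, Sp (fun i => Rabs (a i)) r N <= M) -> CV_disk a r.
Proof.
  intros a r M Hr HN. unfold CV_disk. apply ex_series_Reals_1.
  assert (He : forall n, Rabs (a n * r ^ n) = Rabs (a n) * r ^ n).
  { intros. rewrite Rabs_mult, (Rabs_right (r^n)); auto. apply Rle_ge, pow_le; auto. }
  apply growing_cv.
  - intros n. simpl. rewrite !He. pose proof (Rabs_pos (a (S n))). pose proof (pow_le r (S n) Hr).
    assert (0 <= Rabs (a (S n)) * r ^ S n) by (apply Rmult_le_pos; auto). lra.
  - exists M. intros x [i ->]. eapply Rle_trans; [|apply (HN i)]. unfold Sp.
    right. apply sum_eq. intros. apply He.
Qed.

Lemma CV_disk_radius : forall a r, CV_disk a r -> Rbar_le r (CV_radius a).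
Proof. intros a r H. unfold CV_radius. destruct (Lub_Rbar_correct (CV_disk a)) as [H1 _]. apply H1, H. Qed.

Definition e1 (n : nat) : R := if (n =? 1)%nat then 1 else 0.

Lemma is_series_e1 : forall z, is_series (fun n => e1 n * z ^ n) z.
Proof.
  intros z. apply is_series_Reals. unfold infinite_sum. intros eps Heps. exists 1%nat.
  intros n Hn. replace (sum_f_R0 (fun n => e1 n * z ^ n) n) with z. unfold Rdist. rewrite Rminus_diag, Rabs_R0. auto.
  destruct n. lia. clear Hn. induction n.
  - simpl. unfold e1. simpl. ring.
  - rewrite tech5, <- IHn. unfold e1. simpl. ring.
Qed.

Lemma pwr_1 : forall k b, b O = 0 -> pwr (S k) b 1 = 0.
Proof.
  intros k b H. simpl. unfold PS_mult. simpl. rewrite H, pwr_0 by auto. ring.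
Qed.

Lemma inv_series : forall c1 d2 d3 d4 d5, 0 < c1 ->
  exists r (a : nat -> R), 0 < r /\ a O = 0 /\ a 1%nat = / c1 /\
    (forall k, Rbar_le r (CV_radius (pwr k a))) /\
    forall z, Rabs z < r ->
      c1 * PSeries a z + d2 * (PSeries a z) ^ 2 + d3 * (PSeries a z) ^ 3
      + d4 * (PSeries a z) ^ 4 + d5 * (PSeries a z) ^ 5 = z.
Proof.
  intros c1 d2 d3 d4 d5 Hc.
  set (D := Rabs d2 + Rabs d3 + Rabs d4 + Rabs d5).
  assert (HD : 0 <= D) by (unfold D; pose proof (Rabs_pos d2); pose proof (Rabs_pos d3);
     pose proof (Rabs_pos d4); pose proof (Rabs_pos d5); lra).
  set (s := c1 / (2 * (D + c1))).
  set (r := c1 * s / 2).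
  assert (Hs : 0 < s) by (unfold s; apply Rdiv_lt_0_compat; lra).
  assert (Hs1 : s <= 1).
  { unfold s. apply Rmult_le_reg_r with (2 * (D + c1)). lra. unfold Rdiv. rewrite Rmult_assoc, Rinv_l; lra. }
  assert (Hr : 0 < r) by (unfold r; apply Rdiv_lt_0_compat; try apply Rmult_lt_0_compat; lra).
  assert (Hrs : r / c1 + / c1 * (D * s ^ 2) <= s).
  { unfold r. assert (D * s <= c1 / 2).
    { unfold s. apply Rmult_le_reg_r with (2 * (D + c1)). lra.
      replace (D * (c1 / (2 * (D + c1))) * (2 * (D + c1))) with (D * c1) by (field; lra). nra. }
    assert (/ c1 * (D * s ^ 2) = (D * s) * s / c1) by (field; lra).
    rewrite H0. apply Rle_trans with (c1 * s / 2 / c1 + c1 / 2 * s / c1).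
    apply Rplus_le_compat_l. unfold Rdiv. apply Rmult_le_compat_r. left; apply Rinv_0_lt_compat; auto.
    apply Rmult_le_compat_r; lra. right. field. lra. }
  set (a := coef c1 d2 d3 d4 d5).
  assert (HB := Sp_al_bound c1 d2 d3 d4 d5 r s Hc (Rlt_le _ _ Hr) (conj (Rlt_le _ _ Hs) Hs1) Hrs).
  assert (Ha0 : a O = 0) by apply coef_0.
  assert (Hdisk : forall k, CV_disk (pwr k a) r).
  { intros k. apply CV_disk_of_bound with (s ^ (S k)). lra. intros N.
    set (al := fun i => Rabs (a i)).
    assert (Hal : forall i, 0 <= al i) by (intros; apply Rabs_pos).
    apply Rle_trans with (Sp (pwr k al) r N).
    { unfold Sp. apply sum_Rle. intros n _. apply Rmult_le_compat_r. apply pow_le; lra. apply pwr_abs. }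
    eapply Rle_trans. apply pwr_bound; auto; lra. apply pow_incr. split. apply Sp_nonneg; auto; lra. apply HB. }
  exists r, a. split; [auto|]. split; [auto|]. split; [apply coef_1|].
  split. { intros k. apply CV_disk_radius, Hdisk. }
  intros z Hz.
  assert (Hrad : forall k, Rbar_lt (Rabs z) (CV_radius (pwr k a))).
  { intros k. pose proof (CV_disk_radius _ _ (Hdisk k)). destruct (CV_radius (pwr k a)); simpl in *; auto; lra. }
  set (w := PSeries a z).
  assert (Hp : forall k, is_pseries (pwr k a) z (w ^ (S k))).
  { induction k.
    - simpl. rewrite Rmult_1_r. apply PSeries_correct. apply CV_radius_inside. apply (Hrad O).
    - change (pwr (S k) a) with (PS_mult a (pwr k a)). replace (w ^ S (S k)) with (w * w ^ (S k)) by (simpl; ring).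
      apply is_pseries_mult; auto. apply PSeries_correct. apply CV_radius_inside. apply (Hrad O). apply (Hrad O). }
  assert (Hp2 : forall k, is_series (fun n => pwr k a n * z ^ n) (w ^ S k)) by (intros k; apply is_pseries_R, Hp).
  assert (Hsum : is_series (fun n => (c1 * a n + d2 * pwr 1 a n + d3 * pwr 2 a n + d4 * pwr 3 a n + d5 * pwr 4 a n) * z ^ n)
     (c1 * w + d2 * w ^ 2 + d3 * w ^ 3 + d4 * w ^ 4 + d5 * w ^ 5)).
  { assert (T : forall (c : R) k, is_series (fun n => c * pwr k a n * z ^ n) (c * w ^ (S k))).
    { intros c k. eapply is_series_ext. 2: apply (is_series_scal c _ _ (Hp2 k)). intros n. simpl.
      unfold scal; simpl; unfold mult; simpl. ring. }
    replace (c1 * w + d2 * w ^ 2 + d3 * w ^ 3 + d4 * w ^ 4 + d5 * w ^ 5) with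
      (plus (plus (plus (plus (c1 * w ^ 1) (d2 * w ^ 2)) (d3 * w ^ 3)) (d4 * w ^ 4)) (d5 * w ^ 5))
      by (unfold plus; simpl; ring).
    eapply is_series_ext. 2: apply (is_series_plus _ _ _ _ (is_series_plus _ _ _ _ (is_series_plus _ _ _ _ (is_series_plus _ _ _ _ (T c1 O) (T d2 1%nat)) (T d3 2%nat)) (T d4 3%nat)) (T d5 4%nat)).
    intros n. simpl. unfold plus; simpl. ring. }
  apply is_series_unique in Hsum. rewrite <- Hsum.
  apply is_series_unique. eapply is_series_ext. 2: apply is_series_e1.
  intros n. f_equal. unfold e1.
  destruct n as [|[|n]].
  - rewrite Ha0, !pwr_0 by auto. simpl. ring.
  - rewrite !pwr_1 by auto. unfold a. rewrite coef_1. simpl. field. lra.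
  - replace (if (S (S n) =? 1)%nat then 1 else 0) with 0 by reflexivity.
    unfold a at 1. rewrite coef_fix. unfold Phi. fold a. field_simplify. all: lra.
Qed.

Definition Xp (al be u : R) : R := al * u + be / 3 * u ^ 3 + u ^ 5 / 5.
Definition dX (al be u : R) : R := al + be * u ^ 2 + u ^ 4.
Definition good (al be : R) : Prop := 0 < al /\ be ^ 2 < 4 * al.

Lemma dX_pos : forall al be u, good al be -> 0 < dX al be u.
Proof. intros al be u [H1 H2]. unfold dX.
  assert (al + be * u ^ 2 + u ^ 4 = (u^2 + be/2)^2 + (4*al - be^2)/4) by field.
  rewrite H. assert (0 <= (u^2 + be/2)^2) by apply pow2_ge_0. lra. Qed.

Lemma Xp_derive : forall al be u, is_derive (Xp al be) u (dX al be u).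
Proof. intros. unfold Xp, dX. auto_derive. auto. field. Qed.

Lemma cont_of_derive : forall (f : R -> R) x l, is_derive f x l -> continuity_pt f x.
Proof. intros f x l H. apply continuity_pt_filterlim. apply (ex_derive_continuous f). exists l; auto. Qed.

Lemma Xp_incr : forall al be u v, good al be -> u < v -> Xp al be u < Xp al be v.
Proof.
  intros al be u v Hg Huv.
  destruct (MVT_gen (Xp al be) u v (dX al be)) as [c [Hc Heq]].
  - intros x _. apply Xp_derive.
  - intros x _. eapply cont_of_derive. apply Xp_derive.
  - pose proof (dX_pos al be c Hg). nra.
Qed.

Lemma Xp_inj : forall al be u v, good al be -> Xp al be u = Xp al be v -> u = v.
Proof.
  intros al be u v Hg H. destruct (Rtotal_order u v) as [h|[h|h]]; auto.
  - pose proof (Xp_incr _ _ _ _ Hg h). lra.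
  - pose proof (Xp_incr _ _ _ _ Hg h). lra.
Qed.

Lemma Xp_le : forall al be u v, good al be -> Xp al be u <= Xp al be v -> u <= v.
Proof.
  intros al be u v Hg H. destruct (Rle_lt_dec u v); auto.
  pose proof (Xp_incr _ _ _ _ Hg r). lra.
Qed.

Lemma Xp_lt : forall al be u v, good al be -> Xp al be u < Xp al be v -> u < v.
Proof.
  intros al be u v Hg H. destruct (Rlt_le_dec u v); auto.
  destruct (Req_dec u v). subst; lra.
  assert (v < u) by lra. pose proof (Xp_incr _ _ _ _ Hg H1). lra.
Qed.

Lemma Xp_odd : forall al be u, Xp al be (- u) = - Xp al be u.
Proof. intros. unfold Xp, Rdiv. ring. Qed.

Lemma Xp_0 : forall al be, Xp al be 0 = 0.
Proof. intros. unfold Xp, Rdiv. ring. Qed.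

Lemma Xp_lower : forall al be M, good al be -> 0 <= M -> 4 * al / 9 * M <= Xp al be M.
Proof.
  intros al be M [H1 H2] HM. unfold Xp.
  assert (0 <= 5 * al / 9 + be / 3 * M^2 + M^4 / 5).
  { assert (5 * al / 9 + be / 3 * M^2 + M^4 / 5 = (M^2 + 5 * be / 6)^2 / 5 + 5 / 36 * (4 * al - be ^ 2)) by field.
    rewrite H. assert (0 <= (M^2 + 5 * be / 6)^2) by apply pow2_ge_0. nra. }
  nra.
Qed.

Lemma Xp_surj : forall al be y, good al be -> exists u, Xp al be u = y.
Proof.
  intros al be y Hg. pose proof Hg as [H1 H2].
  set (M := Rabs y / (4 * al / 9)).
  assert (HM : 0 <= M) by (unfold M; apply Rmult_le_pos; [apply Rabs_pos| left; apply Rinv_0_lt_compat; lra]).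
  assert (HX : Rabs y <= Xp al be M).
  { eapply Rle_trans; [|apply Xp_lower; auto]. unfold M. right. field. lra. }
  destruct (IVT_gen (Xp al be) (- M) M y) as [u [_ Hu]].
  - intros x. eapply cont_of_derive. apply Xp_derive.
  - rewrite Xp_odd. assert (0 <= Xp al be M) by (pose proof (Rabs_pos y); lra).
    rewrite Rmin_left by lra. rewrite Rmax_right by lra.
    split; unfold Rabs in HX; destruct (Rcase_abs y); lra.
  - exists u; auto.
Qed.

Definition Wf (al be y : R) : R := epsilon (inhabits 0) (fun u => Xp al be u = y).

Lemma Wf_spec : forall al be y, good al be -> Xp al be (Wf al be y) = y.
Proof. intros. unfold Wf. apply (epsilon_spec (inhabits 0) (fun u => Xp al be u = y)). apply Xp_surj; auto. Qed.

Lemma Wf_Xp : forall al be u, good al be -> Wf al be (Xp al be u) = u.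
Proof. intros. apply Xp_inj with al be; auto. apply Wf_spec; auto. Qed.

Lemma Wf_odd : forall al be y, good al be -> Wf al be (- y) = - Wf al be y.
Proof.
  intros. apply Xp_inj with al be; auto. rewrite Xp_odd, !Wf_spec; auto.
Qed.

Lemma Wf_0 : forall al be, good al be -> Wf al be 0 = 0.
Proof. intros. transitivity (Wf al be (Xp al be 0)). rewrite Xp_0; auto. apply Wf_Xp; auto. Qed.

Lemma Wf_pos : forall al be y, good al be -> 0 < y -> 0 < Wf al be y.
Proof. intros. apply Xp_lt with al be; auto. rewrite Xp_0, Wf_spec; auto. Qed.

Lemma Wf_neg : forall al be y, good al be -> y < 0 -> Wf al be y < 0.
Proof. intros. apply Xp_lt with al be; auto. rewrite Xp_0, Wf_spec; auto. Qed.

Lemma Wf_lt : forall al be y y', good al be -> y < y' -> Wf al be y < Wf al be y'.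
Proof. intros. apply Xp_lt with al be; auto. rewrite !Wf_spec; auto. Qed.

Lemma Xp_expand : forall al be u0 w, Xp al be (u0 + w) = Xp al be u0 + dX al be u0 * w
  + (be * u0 + 2 * u0 ^ 3) * w ^ 2 + (be / 3 + 2 * u0 ^ 2) * w ^ 3 + u0 * w ^ 4 + / 5 * w ^ 5.
Proof. intros. unfold Xp, dX. field. Qed.

Lemma locally_ball : forall (x r : R) (P : R -> Prop), 0 < r ->
  (forall t, Rabs (t - x) < r -> P t) -> locally x P.
Proof.
  intros x r P Hr H. exists (mkposreal r Hr). intros t Ht. apply H. apply Ht.
Qed.

Lemma W_local : forall al be y0, good al be ->
  exists r (a : nat -> R), 0 < r /\ a O = 0 /\ a 1%nat = / dX al be (Wf al be y0) /\
    (forall k, Rbar_le r (CV_radius (pwr k a))) /\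
    forall z, Rabs z < r -> Wf al be (y0 + z) = Wf al be y0 + PSeries a z.
Proof.
  intros al be y0 Hg. set (u0 := Wf al be y0).
  destruct (inv_series (dX al be u0) (be * u0 + 2 * u0 ^ 3) (be / 3 + 2 * u0 ^ 2) u0 (/ 5) (dX_pos _ _ _ Hg))
    as [r [a [Hr [Ha0 [Ha1 [Hrad Heq]]]]]].
  exists r, a. repeat split; auto.
  intros z Hz. apply Xp_inj with al be; auto. rewrite Wf_spec by auto.
  rewrite Xp_expand. unfold u0. rewrite Wf_spec by auto. pose proof (Heq z Hz). fold u0 in H. set (w := PSeries a z) in *. clearbody w. subst z. unfold u0. ring.
Qed.

Lemma W_derive : forall al be y, good al be -> is_derive (Wf al be) y (/ dX al be (Wf al be y)).
Proof.
  intros al be y Hg.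
  destruct (W_local al be y Hg) as [r [a [Hr [Ha0 [Ha1 [Hrad Heq]]]]]].
  assert (H0 : Rbar_lt (Rabs 0) (CV_radius a)).
  { rewrite Rabs_R0. pose proof (Hrad O). simpl in H. destruct (CV_radius a); simpl in *; auto; lra. }
  pose proof (is_derive_PSeries a 0 H0) as HD. rewrite PSeries_0 in HD.
  unfold PS_derive in HD. simpl (INR 1) in HD. rewrite Rmult_1_l, Ha1 in HD.
  apply is_derive_ext_loc with (fun t => Wf al be y + PSeries a (t - y)).
  - apply locally_ball with r; auto. intros t Ht. rewrite <- Heq by auto. f_equal. ring.
  - assert (H1 : is_derive (fun t => PSeries a (t - y)) y (/ dX al be (Wf al be y))).
    { pose proof (is_derive_comp (PSeries a) (fun t => t - y) y (/ dX al be (Wf al be y)) 1) as HC.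
      cbv beta in HC. replace (y - y) with 0 in HC by ring.
      assert (Hl : is_derive (fun t : R => t - y) y 1) by (auto_derive; auto; ring).
      specialize (HC HD Hl). unfold scal in HC; simpl in HC; unfold mult in HC; simpl in HC.
      rewrite Rmult_1_l in HC. exact HC. }
    pose proof (is_derive_plus (fun _ : R => Wf al be y) (fun t => PSeries a (t - y)) y 0 _ (is_derive_const _ _) H1) as H2.
    unfold plus in H2; simpl in H2. rewrite Rplus_0_l in H2. exact H2.
Qed.

Definition Vf (al be : R) (y : R) : R := Wf al be y ^ 2.

Definition e0 (n : nat) : R := if (n =? 0)%nat then 1 else 0.

Lemma is_series_e0 : forall z, is_series (fun n => e0 n * z ^ n) 1.
Proof.
  intros z. apply is_series_Reals. unfold infinite_sum. intros eps Heps. exists O.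
  intros n Hn. replace (sum_f_R0 (fun n => e0 n * z ^ n) n) with 1. unfold Rdist. rewrite Rminus_diag, Rabs_R0. auto.
  clear Hn. induction n.
  - simpl. unfold e0. simpl. ring.
  - rewrite tech5, <- IHn. unfold e0. simpl. ring.
Qed.

Lemma V_analytic : forall al be, good al be -> real_analytic (Vf al be).
Proof.
  intros al be Hg x0.
  destruct (W_local al be x0 Hg) as [r [a [Hr [Ha0 [Ha1 [Hrad Heq]]]]]].
  exists (mkposreal r Hr).
  set (u0 := Wf al be x0).
  exists (fun n => u0 ^ 2 * e0 n + 2 * u0 * a n + pwr 1 a n).
  intros x Hx. simpl in Hx. set (z := x - x0).
  assert (Hrad' : forall k, Rbar_lt (Rabs z) (CV_radius (pwr k a))).
  { intros k. pose proof (Hrad k). destruct (CV_radius (pwr k a)); simpl in *; try contradiction; auto.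
    eapply Rlt_le_trans; eauto. }
  set (w := PSeries a z).
  assert (Hw : is_pseries a z w) by (apply PSeries_correct, CV_radius_inside, (Hrad' O)).
  assert (Hw2 : is_pseries (pwr 1 a) z (w * w)).
  { change (pwr 1 a) with (PS_mult a (pwr 0 a)). apply is_pseries_mult; auto; apply (Hrad' O). }
  assert (HV : Vf al be x = u0 ^ 2 + 2 * u0 * w + w * w).
  { unfold Vf. replace x with (x0 + z) by (unfold z; ring). rewrite Heq. fold u0 w. ring. unfold z. auto. }
  rewrite HV. apply is_pseries_R. apply is_pseries_R in Hw. apply is_pseries_R in Hw2.
  pose proof (is_series_scal (u0 ^ 2) _ _ (is_series_e0 z)) as H1.
  pose proof (is_series_scal (2 * u0) _ _ Hw) as H2.
  pose proof (is_series_plus _ _ _ _ (is_series_plus _ _ _ _ H1 H2) Hw2) as H3.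
  eapply is_series_ext. 2: { replace (u0 ^ 2 + 2 * u0 * w + w * w) with
     (plus (plus (scal (u0 ^ 2) 1) (scal (2 * u0) w)) (w * w)) by (unfold plus, scal; simpl; unfold mult; simpl; ring).
     exact H3. }
  intros n. unfold plus, scal; simpl; unfold mult; simpl. ring.
Qed.

Lemma V_derive : forall al be y, good al be ->
  is_derive (Vf al be) y (2 * Wf al be y / dX al be (Wf al be y)).
Proof.
  intros al be y Hg. unfold Vf.
  pose proof (is_derive_pow (Wf al be) 2 y _ (W_derive al be y Hg)) as H.
  replace (2 * Wf al be y / dX al be (Wf al be y)) with
    (INR 2 * / dX al be (Wf al be y) * Wf al be y ^ Init.Nat.pred 2) by (simpl; unfold Rdiv; ring). exact H.
Qed.

Lemma Derive_V : forall al be y, good al be ->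
  Derive (Vf al be) y = 2 * Wf al be y / dX al be (Wf al be y).
Proof. intros. apply is_derive_unique, V_derive; auto. Qed.

Lemma Derive_n_V2 : forall al be, good al be -> Derive_n (Vf al be) 2 0 = 2 / al ^ 2.
Proof.
  intros al be Hg. simpl.
  rewrite (Derive_ext _ (fun y => 2 * Wf al be y / dX al be (Wf al be y))) by (intros; apply Derive_V; auto).
  apply is_derive_unique.
  assert (HW0 := Wf_0 al be Hg).
  assert (Hd0 : dX al be 0 = al) by (unfold dX; ring).
  pose proof (dX_pos al be 0 Hg) as Hp.
  assert (Hf : is_derive (fun y => 2 * Wf al be y) 0 (2 * / al)).
  { pose proof (is_derive_scal (Wf al be) 0 2 _ (W_derive al be 0 Hg)) as H.
    rewrite HW0, Hd0 in H. exact H. }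
  assert (Hg2 : is_derive (fun y => dX al be (Wf al be y)) 0 0).
  { assert (Hdx : is_derive (dX al be) (Wf al be 0) (2 * be * Wf al be 0 + 4 * Wf al be 0 ^ 3)).
    { unfold dX. auto_derive. auto. ring. }
    pose proof (is_derive_comp (dX al be) (Wf al be) 0 _ _ Hdx (W_derive al be 0 Hg)) as H.
    rewrite HW0 in H. unfold scal in H; simpl in H; unfold mult in H; simpl in H.
    replace (/ dX al be 0 * (2 * be * 0 + 4 * (0 * (0 * (0 * 1))))) with 0 in H by ring. exact H. }
  pose proof (is_derive_div _ _ 0 _ _ Hf Hg2) as H. cbv beta in H.
  rewrite HW0, Hd0 in H. replace (2 / (al * (al * 1))) with ((2 * / al * al - 2 * 0 * 0) / al ^ 2).
  apply H. lra. field. lra.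
Qed.

Lemma V_UM : forall al be, good al be -> UM (Vf al be).
Proof.
  intros al be Hg. split; [apply V_analytic; auto|].
  split; [intros y; unfold Vf; apply pow2_ge_0|].
  split; [unfold Vf; rewrite Wf_0; auto; ring|].
  split.
  { intros y Hy. rewrite Derive_V by auto. pose proof (dX_pos al be (Wf al be y) Hg).
    destruct (Rlt_dec y 0).
    - pose proof (Wf_neg al be y Hg r).
      assert (0 < - y * (2 * - Wf al be y) / dX al be (Wf al be y)).
      { apply Rdiv_lt_0_compat; auto. nra. }
      replace (y * (2 * Wf al be y / dX al be (Wf al be y))) with (- y * (2 * - Wf al be y) / dX al be (Wf al be y)) by (field; lra). auto.
    - assert (0 < y) by lra. pose proof (Wf_pos al be y Hg H0).
      replace (y * (2 * Wf al be y / dX al be (Wf al be y))) with (y * (2 * Wf al be y) / dX al be (Wf al be y)) by (field; lra).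
      apply Rdiv_lt_0_compat; auto. nra. }
  split.
  - intros P [M HM]. exists (Xp al be (Rabs M + 1)). intros y Hy. apply HM.
    assert (Rabs M + 1 < Wf al be y).
    { rewrite <- (Wf_Xp al be (Rabs M + 1) Hg). apply Wf_lt; auto. }
    unfold Vf. pose proof (Rabs_pos M). pose proof (Rle_abs M). nra.
  - intros P [M HM]. exists (Xp al be (- (Rabs M + 1))). intros y Hy. apply HM.
    assert (Wf al be y < - (Rabs M + 1)).
    { rewrite <- (Wf_Xp al be (- (Rabs M + 1)) Hg). apply Wf_lt; auto. }
    unfold Vf. pose proof (Rabs_pos M). pose proof (Rle_abs M). nra.
Qed.

Lemma V_even : forall al be, good al be -> even_fun (Vf al be).
Proof. intros al be Hg y. unfold Vf. rewrite Wf_odd by auto. ring. Qed.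

Lemma V_deg : forall al be, good al be -> deg_at0 (Vf al be) 2.
Proof.
  intros al be Hg. split.
  - rewrite Derive_n_V2 by auto. destruct Hg as [H1 H2].
    assert (0 < 2 / al ^ 2) by (apply Rdiv_lt_0_compat; [lra| apply pow_lt; lra]). lra.
  - intros k Hk. destruct k as [|[|k]]; [| |lia].
    + simpl. unfold Vf. rewrite Wf_0; auto. ring.
    + simpl. rewrite (Derive_ext _ (Vf al be)) by reflexivity. rewrite Derive_V, Wf_0 by auto.
      unfold Rdiv. ring.
Qed.

Lemma V_notquad : forall al be, good al be -> ~ quadratic (Vf al be).
Proof.
  intros al be Hg [c Hc].
  assert (H1 := Hc (Xp al be 1)). assert (H2 := Hc (Xp al be 2)). assert (H3 := Hc (Xp al be 3)).
  unfold Vf in *. rewrite Wf_Xp in H1, H2, H3 by auto.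
  assert (P1 : 0 < Xp al be 1) by (rewrite <- (Xp_0 al be); apply Xp_incr; auto; lra).
  assert (P2 : Xp al be 1 < Xp al be 2) by (apply Xp_incr; auto; lra).
  assert (P3 : Xp al be 2 < Xp al be 3) by (apply Xp_incr; auto; lra).
  set (x1 := Xp al be 1) in *. set (x2 := Xp al be 2) in *. set (x3 := Xp al be 3) in *.
  assert (E2 : x2 = 2 * x1).
  { assert (x2 ^ 2 = (2 * x1) ^ 2) by (apply Rmult_eq_reg_l with c; [|intro; subst c; lra]; nra).
    apply Rsqr_inj; unfold Rsqr; try nra. }
  assert (E3 : x3 = 3 * x1).
  { assert (x3 ^ 2 = (3 * x1) ^ 2) by (apply Rmult_eq_reg_l with c; [|intro; subst c; lra]; nra).
    apply Rsqr_inj; unfold Rsqr; try nra. }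
  unfold x1, x2, x3, Xp in E2, E3. lra.
Qed.

Lemma V_Vinv : forall al be t, good al be -> 0 <= t -> Vinv (Vf al be) t = Xp al be (sqrt t).
Proof.
  intros al be t Hg Ht. unfold Vinv.
  assert (Hex : exists y, 0 <= y /\ Vf al be y = t).
  { exists (Xp al be (sqrt t)). split.
    - rewrite <- (Xp_0 al be). destruct (Req_dec t 0). subst. rewrite sqrt_0. lra.
      left. apply Xp_incr; auto. apply sqrt_lt_R0. lra.
    - unfold Vf. rewrite Wf_Xp by auto. rewrite <- Rsqr_pow2. apply Rsqr_sqrt. auto. }
  pose proof (epsilon_spec (inhabits 0) (fun y => 0 <= y /\ Vf al be y = t) Hex) as HH.
  revert HH. generalize (epsilon (inhabits 0) (fun y => 0 <= y /\ Vf al be y = t)).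
  intros y [Hy Hv].
  assert (Hw : 0 <= Wf al be y).
  { destruct Hy as [Hy|Hy]. left. apply Wf_pos; auto. rewrite <- Hy, Wf_0; auto. lra. }
  rewrite <- (Wf_spec al be y Hg). f_equal. unfold Vf in Hv. subst t.
  rewrite sqrt_pow2; auto.
Qed.

Lemma cont_f : forall (V : R -> R) th x, continuous V x -> 0 < th - V x ->
  continuous (fun y => 1 / (sqrt 2 * sqrt (th - V y))) x.
Proof.
  intros V th x HV Hp.
  apply (continuous_mult (fun _ => 1) (fun y => / (sqrt 2 * sqrt (th - V y)))).
  apply continuous_const.
  apply continuous_Rinv_comp.
  apply (continuous_mult (fun _ => sqrt 2) (fun y => sqrt (th - V y))).
  apply continuous_const.
  apply continuous_sqrt_comp.
  apply (continuous_minus (fun _ => th) V). apply continuous_const. auto.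
  apply Rmult_integral_contrapositive. split. apply sqrt2_neq_0. apply Rgt_not_eq. apply sqrt_lt_R0. auto.
Qed.

Definition Gf (al be th phi : R) : R :=
  al * phi + be * th * (phi - sin phi * cos phi) / 2
  + th ^ 2 * (3 * (phi - sin phi * cos phi) / 8 - sin phi ^ 3 * cos phi / 4).

Lemma Gf_derive : forall al be th phi,
  is_derive (Gf al be th) phi (al + be * th * sin phi ^ 2 + th ^ 2 * sin phi ^ 4).
Proof.
  intros. unfold Gf. auto_derive. auto.
  pose proof (sin2_cos2 phi). unfold Rsqr in H.
  set (s := sin phi) in *. set (c := cos phi) in *. clearbody s c.
  assert (Hc : c * c = 1 - s * s) by lra.
  replace (1 * c * ((1+1+1) * (s*(s*1))) * c) with ((1+1+1)*(s*(s*1)) * (c*c)) by ring.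
  replace (1 * c * c) with (c * c) by ring. rewrite Hc. field.
Qed.

Lemma asin_derive : forall t, -1 < t < 1 -> is_derive asin t (/ sqrt (1 - t ^ 2)).
Proof.
  intros t Ht. apply is_derive_Reals.
  pose proof (derive_pt_asin t Ht) as E. unfold derive_pt in E.
  destruct (derivable_pt_asin t Ht) as [l Hl]. simpl in E. subst l.
  replace (/ sqrt (1 - t ^ 2)) with (1 / sqrt (1 - t²)). exact Hl.
  unfold Rdiv, Rsqr. rewrite Rmult_1_l. f_equal. f_equal. simpl. ring.
Qed.

Lemma asin_lim1 : filterlim asin (at_left 1) (locally (PI / 2)).
Proof.
  intros P [eps Heps]. unfold at_left, within.
  pose proof PI_RGT_0 as HPI.
  set (e := Rmin (eps / 2) (PI / 2)).
  assert (He : 0 < e) by (unfold e; apply Rmin_pos; pose proof (cond_pos eps); lra).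
  assert (He2 : e <= PI / 2) by apply Rmin_r.
  assert (He3 : e <= eps / 2) by apply Rmin_l. clearbody e.
  assert (Hs : sin (PI / 2 - e) < 1).
  { rewrite <- sin_PI2. apply sin_increasing_1; lra. }
  assert (Hs0 : 0 <= sin (PI / 2 - e)) by (apply sin_ge_0; lra).
  apply locally_ball with (1 - sin (PI / 2 - e)). lra.
  intros u Hu Hu1. apply Heps.
  assert (Hu2 : sin (PI / 2 - e) < u) by (unfold Rabs in Hu; destruct (Rcase_abs (u - 1)); lra).
  pose proof (asin_bound u) as [Hb1 Hb2].
  assert (Ha : PI / 2 - e < asin u).
  { destruct (Rlt_le_dec (PI / 2 - e) (asin u)); auto.
    destruct r. - pose proof (sin_increasing_1 (asin u) (PI / 2 - e)) as Hx.
      rewrite sin_asin in Hx by (split; lra). assert (u < sin (PI / 2 - e)) by (apply Hx; lra). lra.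
    - assert (-1 <= u <= 1) by (split; lra). rewrite <- H, sin_asin in Hu2 by auto. lra. }
  change (Rabs (asin u - PI / 2) < eps).
  rewrite Rabs_left1 by lra. pose proof (cond_pos eps). lra.
Qed.

Definition Tval (al be th : R) : R := PI / (2 * sqrt 2) * (al + be * th / 2 + 3 * th ^ 2 / 8).

Lemma main_int : forall al be th, good al be -> 0 < th ->
  is_RInt_gen (fun y => 1 / (sqrt 2 * sqrt (th - Vf al be y)))
    (at_point 0) (at_left (Xp al be (sqrt th))) (Tval al be th).
Proof.
  intros al be th Hg Hth.
  set (s0 := sqrt th).
  assert (Hs0 : 0 < s0) by (apply sqrt_lt_R0; auto).
  assert (Hs0th : s0 ^ 2 = th) by (unfold s0; rewrite <- Rsqr_pow2; apply Rsqr_sqrt; lra).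
  set (b0 := Xp al be s0).
  assert (Hb0 : 0 < b0) by (unfold b0; rewrite <- (Xp_0 al be); apply Xp_incr; auto).
  assert (HWb0 : Wf al be b0 = s0) by (apply Wf_Xp; auto).
  assert (HWmb0 : Wf al be (- b0) = - s0) by (rewrite Wf_odd, HWb0; auto).
  assert (HWr : forall y, -b0 < y < b0 -> - s0 < Wf al be y < s0).
  { intros y [H1 H2]. split. rewrite <- HWmb0. apply Wf_lt; auto. rewrite <- HWb0. apply Wf_lt; auto. }
  clearbody s0 b0.
  set (F := fun y => / sqrt 2 * Gf al be th (asin (/ s0 * Wf al be y))).
  set (f := fun y => 1 / (sqrt 2 * sqrt (th - Vf al be y))).
  assert (Hsq2 : 0 < sqrt 2) by apply Rlt_sqrt2_0.
  assert (HF : forall y, -b0 < y < b0 -> is_derive F y (f y)).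
  { intros y Hy. pose proof (HWr y Hy) as Hw.
    set (w := Wf al be y) in *. set (t := / s0 * w).
    assert (Ht : -1 < t < 1).
    { unfold t. split; apply Rmult_lt_reg_l with s0; auto; field_simplify; lra. }
    assert (Hd := dX_pos al be w Hg).
    assert (D1 : is_derive (fun y => / s0 * Wf al be y) y (/ s0 * / dX al be w)).
    { apply (is_derive_scal (Wf al be) y (/ s0)). apply W_derive; auto. }
    assert (D2 := is_derive_comp asin (fun y => / s0 * Wf al be y) y _ _ (asin_derive t Ht) D1).
    assert (D3 := is_derive_comp (Gf al be th) (fun y => asin (/ s0 * Wf al be y)) y _ _ (Gf_derive al be th (asin t)) D2).
    assert (D4 := is_derive_scal (fun y => Gf al be th (asin (/ s0 * Wf al be y))) y (/ sqrt 2) _ D3).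
    assert (H1t : 0 < 1 - t ^ 2) by nra.
    assert (Hst : sqrt (th - Vf al be y) = s0 * sqrt (1 - t ^ 2)).
    { unfold Vf. fold w. rewrite <- Hs0th. replace (s0 ^ 2 - w ^ 2) with (s0 ^ 2 * (1 - t ^ 2)) by (unfold t; field; lra).
      rewrite sqrt_mult_alt by (apply pow2_ge_0). rewrite sqrt_pow2 by lra. auto. }
    assert (Hsqt : 0 < sqrt (1 - t ^ 2)) by (apply sqrt_lt_R0; auto).
    replace (f y) with (scal (/ sqrt 2) (scal (scal (/ s0 * / dX al be w) (/ sqrt (1 - t ^ 2)))
       (al + be * th * sin (asin t) ^ 2 + th ^ 2 * sin (asin t) ^ 4))).
    exact D4.
    unfold f. rewrite Hst. unfold scal; simpl; unfold mult; simpl. rewrite sin_asin by lra.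
    replace (t * (t * 1)) with (t ^ 2) by ring.
    replace (al + be * th * t ^ 2 + th * (th * 1) * (t * (t * t ^ 2))) with (dX al be w)
      by (unfold dX, t; rewrite <- Hs0th; field; lra).
    field. repeat split; lra. }
  assert (Hcontf : forall x, -b0 < x < b0 -> continuous f x).
  { intros x Hx. unfold f. apply cont_f.
    apply (ex_derive_continuous (Vf al be)). eexists; apply V_derive; auto.
    pose proof (HWr x Hx). unfold Vf. rewrite <- Hs0th. nra. }
  assert (Hloc : forall x, -b0 < x < b0 -> locally x (fun y => f y = Derive F y)).
  { intros x Hx. apply locally_ball with (Rmin (x + b0) (b0 - x)).
    apply Rmin_pos; lra. intros y Hy.
    assert (-b0 < y < b0).
    { pose proof (Rmin_l (x + b0) (b0 - x)). pose proof (Rmin_r (x + b0) (b0 - x)).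
      unfold Rabs in Hy. destruct (Rcase_abs (y - x)); split; lra. }
    symmetry. apply is_derive_unique. apply HF; auto. }
  assert (Hprod : forall P : R -> Prop, (forall b x, 0 < b < b0 -> 0 <= x <= b -> P x) ->
     filter_prod (at_point 0) (at_left b0)
       (fun ab => forall x, Rmin (fst ab) (snd ab) <= x <= Rmax (fst ab) (snd ab) -> P x)).
  { intros P HP. apply Filter_prod with (fun a => a = 0) (fun b => 0 < b < b0).
    - reflexivity.
    - unfold at_left, within. apply locally_ball with b0; auto. intros y Hy Hy'.
      unfold Rabs in Hy. destruct (Rcase_abs (y - b0)); split; lra.
    - intros a b Ha Hb x Hx. simpl in Hx. subst a. rewrite Rmin_left, Rmax_right in Hx by lra.
      apply (HP b); auto. }
  set (L := / sqrt 2 * Gf al be th (PI / 2)).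
  assert (Hlim : filterlim F (at_left b0) (locally L)).
  { set (tf := fun y => / s0 * Wf al be y).
    assert (Ht1 : filterlim tf (at_left b0) (at_left 1)).
    { intros P HP. unfold at_left, within in *.
      assert (Hc : continuous tf b0).
      { apply (ex_derive_continuous tf). eexists. apply (is_derive_scal (Wf al be) b0 (/ s0)). apply W_derive; auto. }
      assert (Htb : tf b0 = 1) by (unfold tf; rewrite HWb0; field; lra).
      unfold continuous in Hc. rewrite Htb in Hc. specialize (Hc _ HP).
      unfold filtermap in *. apply (filter_imp (fun x => tf x < 1 -> P (tf x))); [| apply Hc].
      intros y H1 H2. apply H1.
      assert (Wf al be y < s0) by (rewrite <- HWb0; apply Wf_lt; auto).
      unfold tf. replace 1 with (/ s0 * s0) by (field; lra).
      apply Rmult_lt_compat_l; [apply Rinv_0_lt_compat|]; auto. }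
    assert (Hg3 : filterlim (fun p => / sqrt 2 * Gf al be th p) (locally (PI / 2)) (locally L)).
    { apply (ex_derive_continuous (fun p => / sqrt 2 * Gf al be th p)). eexists.
      apply (is_derive_scal (Gf al be th) (PI / 2) (/ sqrt 2)). apply Gf_derive. }
    apply (filterlim_comp _ _ _ (fun y => asin (tf y)) (fun p => / sqrt 2 * Gf al be th p) _ (locally (PI / 2))); auto.
    apply (filterlim_comp _ _ _ tf asin _ (at_left 1)); auto. apply asin_lim1. }
  assert (H0 : filterlim F (at_point 0) (locally (F 0))).
  { intros P HP. apply locally_singleton in HP. exact HP. }
  pose proof (@filter_filter _ _ (at_left_proper_filter b0)) as FL.
  pose proof (@is_RInt_gen_Derive (at_point 0) (at_left b0) _ FL F (F 0) L
    (Hprod (ex_derive F) ltac:(intros b x Hb Hx; eexists; apply HF; lra))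
    (Hprod (fun x => continuous (Derive F) x) ltac:(intros b x Hb Hx; apply continuous_ext_loc with f; [apply Hloc; lra| apply Hcontf; lra]))
    H0 Hlim) as HR.
  assert (HF0 : F 0 = 0).
  { unfold F. rewrite Wf_0, Rmult_0_r, asin_0 by auto. unfold Gf, Rdiv. rewrite sin_0. ring. }
  assert (HL : L - F 0 = Tval al be th).
  { rewrite HF0. unfold L, Tval, Gf. rewrite sin_PI2, cos_PI2. field. lra. }
  rewrite HL in HR.
  eapply is_RInt_gen_ext; [| apply HR].
  apply Filter_prod with (fun a => a = 0) (fun b => 0 < b < b0).
  - reflexivity.
  - unfold at_left, within. apply locally_ball with b0; auto. intros y Hy Hy'.
    unfold Rabs in Hy. destruct (Rcase_abs (y - b0)); split; lra.
  - intros a b Ha Hb x Hx. simpl in Hx. subst a. rewrite Rmin_left, Rmax_right in Hx by lra.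
    apply is_derive_unique. apply HF. lra.
Qed.

Lemma no_sqrt2_nat : forall D N, (0 < D)%nat -> (N * N = 2 * (D * D))%nat -> False.
Proof.
  intros D. induction D as [D IH] using (well_founded_induction Wf_nat.lt_wf).
  intros N HD HN. destruct (Nat.Even_or_Odd N) as [[m Hm]|[m Hm]]; subst N.
  - assert (HDm : (D * D = 2 * (m * m))%nat) by nia.
    assert (Hm0 : (0 < m)%nat) by (destruct m; nia).
    assert (Hlt : (m < D)%nat) by nia.
    apply (IH m Hlt D Hm0). lia.
  - nia.
Qed.

Lemma sqrt2_irrational : ~ exists q : Q, Q2R q = sqrt 2.
Proof.
  intros [[n d] Hq]. unfold Q2R in Hq. simpl in Hq.
  assert (Hd : 0 < IZR (Z.pos d)) by (apply IZR_lt; lia).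
  assert (H1 : IZR n = sqrt 2 * IZR (Z.pos d)).
  { rewrite <- Hq. field. lra. }
  assert (H2 : IZR (n * n) = IZR (2 * (Z.pos d * Z.pos d))).
  { rewrite !mult_IZR, H1. replace (sqrt 2 * IZR (Z.pos d) * (sqrt 2 * IZR (Z.pos d))) with
      (sqrt 2 * sqrt 2 * (IZR (Z.pos d) * IZR (Z.pos d))) by ring.
    rewrite sqrt_sqrt by lra. simpl. ring. }
  apply eq_IZR in H2.
  apply (no_sqrt2_nat (Pos.to_nat d) (Z.abs_nat n)). lia.
  apply (f_equal Z.abs_nat) in H2. rewrite Zabs2Nat.inj_mul in H2. rewrite H2.
  rewrite Zabs2Nat.inj_mul, Zabs2Nat.inj_mul. simpl. lia.
Qed.

Theorem mainTheorem19 : forall E : R, 0 < E ->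
  exists V1 V2 : R -> R,
    UM V1 /\ UM V2 /\
    even_fun V1 /\ even_fun V2 /\
    ~ quadratic V1 /\ ~ quadratic V2 /\
    deg_at0 V1 2 /\ deg_at0 V2 2 /\
    (forall theta : R, 0 < theta < E ->
       exists l : R, is_a V1 theta l /\ is_b V2 E theta l) /\
    irrational (sqrt (Derive_n V2 2 0 / Derive_n V1 2 0)).
Proof.
  intros E HE.
  pose proof Rlt_sqrt2_0 as Hs2.
  assert (Hs2b : 1 < sqrt 2).
  { rewrite <- sqrt_1. apply sqrt_lt_1; lra. }
  remember (3 * sqrt 2 / 8) as k eqn:Ek.
  assert (Hk : 3 / 16 < k) by (subst k; lra).
  remember (k * E ^ 2) as al1 eqn:Eal1.
  remember (k * E ^ 2 + 3 * E ^ 2 / 8) as al2 eqn:Eal2. remember (- (3 * E / 2)) as be2 eqn:Ebe2.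
  assert (HE2 : 0 < E ^ 2) by (apply pow_lt; lra).
  assert (g1 : good al1 0) by (unfold good; subst al1; split; nra).
  assert (g2 : good al2 be2) by (unfold good; subst al2 be2; split; nra).
  exists (Vf al1 0), (Vf al2 be2).
  split; [apply V_UM; auto|]. split; [apply V_UM; auto|].
  split; [apply V_even; auto|]. split; [apply V_even; auto|].
  split; [apply V_notquad; auto|]. split; [apply V_notquad; auto|].
  split; [apply V_deg; auto|]. split; [apply V_deg; auto|].
  split.
  - intros th [h1 h2]. exists (Tval al1 0 th). split.
    + unfold is_a. rewrite (V_Vinv al1 0 th g1) by lra. apply (main_int al1 0 th g1). lra.
    + unfold is_b. rewrite (V_Vinv al2 be2 (E - th) g2) by lra.
      replace (Tval al1 0 th) with (Tval al2 be2 (E - th)).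
      apply (main_int al2 be2 (E - th) g2). lra.
      unfold Tval. subst al1 al2 be2. field. lra.
  - rewrite !Derive_n_V2 by auto.
    assert (Hal1 : 0 < al1) by (subst al1; nra).
    assert (Hal2 : 0 < al2) by (subst al2; nra).
    replace (2 / al2 ^ 2 / (2 / al1 ^ 2)) with ((al1 / al2) ^ 2) by (field; lra).
    rewrite sqrt_pow2 by (apply Rlt_le, Rdiv_lt_0_compat; auto).
    replace (al1 / al2) with (2 - sqrt 2).
    + intros [q Hq]. apply sqrt2_irrational. exists (2 - q)%Q.
      rewrite Q2R_minus, Hq. unfold Q2R. simpl. field.
    + subst al1 al2 k. field_simplify_eq; [| nra].
      assert (sqrt 2 * sqrt 2 = 2) by (apply sqrt_sqrt; lra).
      nra.
Qed.
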